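(* Let $n\ge2$ and let $\mathbb{A}=(A_{ij})_{i,j=1}^n$ be an operator matrix as in the context, and assume that $\mathbb{A}_k$ is closed for all $k\in\{2,\ldots,n\}$. If $\sigma(A_{kk})\cup\sigma(\mathbb{A}_k)\ne\mathbb{C}$ for all $k\in\{2,\ldots,n-1\}$, then $\sigma(\mathbb{A})\subset S_n(\mathbb{A})$.
   Context: Let $X_1,\ldots,X_n$ be complex Banach spaces and $X=X_1\times\cdots\times X_n$ with norm $\|x\|=\sum_i\|x_i\|_{X_i}$. For $i,j\in\{1,\ldots,n\}$, $A_{ij}:\mathcal{D}(A_{ij})\subset X_j\to X_i$ are linear operators with $A_{ii}$ closed and, for $i\ne j$, $A_{ij}$ relatively $A_{jj}$-bounded (i.e. $\mathcal{D}(A_{jj})\subset\mathcal{D}(A_{ij})$ and there are $\alpha,\beta\ge0$ with $\|A_{ij}x\|\le\alpha\|x\|+\beta\|A_{jj}x\|$ for $x\in\mathcal{D}(A_{jj})$). The operator matrix $\mathbb{A}=(A_{ij})$ acts on $\mathcal{D}(\mathbb{A})=\mathcal{D}(A_{11})\times\cdots\times\mathcal{D}(A_{nn})$ by $(\mathbb{A}x)_i=\sum_jA_{ij}x_j$. For $1\le k\le n$, $\mathbb{A}_k:=(A_{ij})_{i,j=1}^k$ acts on $X_1\times\cdots\times X_k$ with domain $\mathcal{D}(A_{11})\times\cdots\times\mathcal{D}(A_{kk})$. For a linear operator $S$ on a Banach space $Y$, $\sigma(S)$ is the set of $\lambda$ for which $\lambda-S:\mathcal{D}(S)\to Y$ is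 not bijective with bounded inverse. For $j\ne k$ and $\lambda\notin\sigma(A_{kk})\cup\sigma(A_{jj})$ set \[ \mathcal{R}_{kj}(\lambda):=\sum_{i=1,i\ne k}^n\Big\|\Big(A_{ik}(\lambda-A_{kk})^{-1}A_{kj}+(1-\delta_{ij})A_{ij}\Big)(\lambda-A_{jj})^{-1}\Big\|, \] ($\delta_{ij}$ the Kronecker delta, norms are operator norms $X_j\to X_i$), the Schur sets $S_{kj}(\mathbb{A}):=\sigma(A_{kk})\cup\sigma(A_{jj})\cup\{\lambda\in\mathbb{C}\setminus(\sigma(A_{kk})\cup\sigma(A_{jj})):\mathcal{R}_{kj}(\lambda)\ge1\}$, and $S_k(\mathbb{A}):=\bigcup_{j=1,j\ne k}^nS_{kj}(\mathbb{A})$. *)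

(* Defs.v *)
(* Complex scalars: R[i] for R : realType
   (mathcomp-real-closed's complex numbers); complex Banach spaces are
   completeNormedModType R[i]. *)
From HB Require Import structures.
From mathcomp Require Import all_boot all_order all_algebra.
From mathcomp Require Import all_classical all_reals all_analysis.
From mathcomp Require Import complex.
From Stdlib Require Import ClassicalEpsilon.
Set Implicit Arguments. Unset Strict Implicit. Unset Printing Implicit Defensive.
Import Order.TTheory GRing.Theory Num.Theory.
Local Open Scope ring_scope.
Local Open Scope classical_set_scope.

(* A (possibly unbounded) operator X -> Y: a domain and an action
   (the values of [app] outside [dom] are irrelevant). *)
Record op (R : realType) (X Y : completeNormedModType R[i]) := Op {
  dom : set X;
  app : X -> Y }.
Arguments dom {R X Y}.
Arguments app {R X Y}.

Section Defs.
Variable R : realType.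
Local Notation C := R[i].

Definition linear_op (X Y : completeNormedModType C) (T : op X Y) : Prop :=
  dom T 0 /\
  (forall x y, dom T x -> dom T y -> dom T (x + y)) /\
  (forall (a : C) x, dom T x -> dom T (a *: x)) /\
  (forall x y, dom T x -> dom T y -> app T (x + y) = app T x + app T y) /\
  (forall (a : C) x, dom T x -> app T (a *: x) = a *: app T x).

Definition closed_op (X Y : completeNormedModType C) (T : op X Y) : Prop :=
  forall (u : nat -> X) (x : X) (y : Y),
    (forall t, dom T (u t)) ->
    u @ \oo --> x -> (fun t => app T (u t)) @ \oo --> y ->
    dom T x /\ app T x = y.

Definition rel_bounded (X Y : completeNormedModType C) (T : op X Y) (S : op X X)
  : Prop :=
  (forall x, dom S x -> dom T x) /\
  exists alpha beta : C, 0 <= alpha /\ 0 <= beta /\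
    forall x, dom S x -> `|app T x| <= alpha * `|x| + beta * `|app S x|.

Definition is_resolvent (X : completeNormedModType C) (S : op X X) (lam : C)
    (Rs : X -> X) : Prop :=
  (forall y, dom S (Rs y)) /\
  (forall y, lam *: Rs y - app S (Rs y) = y) /\
  (forall x, dom S x -> Rs (lam *: x - app S x) = x) /\
  exists M : C, forall y, `|Rs y| <= M * `|y|.

Definition spectrum (X : completeNormedModType C) (S : op X X) : set C :=
  [set lam | ~ exists Rs, is_resolvent S lam Rs].

(* the resolvent (lam - S)^{-1}; meaningful when lam is not in the spectrum,
   where it is unique *)
Definition resolvent (X : completeNormedModType C) (S : op X X) (lam : C) : X -> X :=
  epsilon (inhabits (fun _ => 0)) (is_resolvent S lam).

Definition opnorm (X Y : completeNormedModType C) (T : X -> Y) : \bar R :=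
  ereal_sup [set (complex.Re `|T x|)%:E | x in [set x : X | `|x| <= 1]].

Definition sumnorm m (X : 'I_m -> completeNormedModType C) (x : forall i, X i) : C :=
  \sum_(i < m) `|x i|.

Definition mx_dom m (X : 'I_m -> completeNormedModType C)
    (A : forall i j : 'I_m, op (X j) (X i)) : set (forall i, X i) :=
  [set x | forall i, dom (A i i) (x i)].

Definition mx_app m (X : 'I_m -> completeNormedModType C)
    (A : forall i j : 'I_m, op (X j) (X i)) (x : forall i, X i) : forall i, X i :=
  fun i => \sum_(j < m) app (A i j) (x j).

(* the operator matrix is closed (graph closed in the product, whose sum-norm
   topology is the product topology) *)
Definition mx_closed m (X : 'I_m -> completeNormedModType C)
    (A : forall i j : 'I_m, op (X j) (X i)) : Prop :=
  forall (u : nat -> forall i, X i) (x y : forall i, X i),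
    (forall t, mx_dom A (u t)) ->
    (forall i, (fun t => u t i) @ \oo --> x i) ->
    (forall i, (fun t => mx_app A (u t) i) @ \oo --> y i) ->
    mx_dom A x /\ mx_app A x = y.

Definition mx_is_resolvent m (X : 'I_m -> completeNormedModType C)
    (A : forall i j : 'I_m, op (X j) (X i)) (lam : C)
    (Rs : (forall i, X i) -> (forall i, X i)) : Prop :=
  (forall y, mx_dom A (Rs y)) /\
  (forall y i, lam *: Rs y i - mx_app A (Rs y) i = y i) /\
  (forall x, mx_dom A x ->
     Rs (fun i => lam *: x i - mx_app A x i) = x) /\
  exists M : C, forall y, sumnorm (Rs y) <= M * sumnorm y.

Definition mx_spectrum m (X : 'I_m -> completeNormedModType C)
    (A : forall i j : 'I_m, op (X j) (X i)) : set C :=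
  [set lam | ~ exists Rs, mx_is_resolvent A lam Rs].

(* the upper-left k x k corner A_k = (A_ij)_{i,j=1..k}, for k <= n *)
Definition cornerfam n k (hk : (k <= n)%N) (X : 'I_n -> completeNormedModType C) :
  'I_k -> completeNormedModType C := fun i => X (widen_ord hk i).

Definition cornermx n k (hk : (k <= n)%N) (X : 'I_n -> completeNormedModType C)
    (A : forall i j : 'I_n, op (X j) (X i)) :
    forall i j : 'I_k, op (cornerfam hk X j) (cornerfam hk X i) :=
  fun i j => A (widen_ord hk i) (widen_ord hk j).

(* R_kj(lam) (indices 0-based here) *)
Definition schurR n (X : 'I_n -> completeNormedModType C)
    (A : forall i j : 'I_n, op (X j) (X i)) (k j : 'I_n) (lam : C) : \bar R :=
  (\sum_(i < n | i != k)
     opnorm (fun y : X j =>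
       (app (A i k) (resolvent (A k k) lam (app (A k j) (resolvent (A j j) lam y)))
       + (if i != j then app (A i j) (resolvent (A j j) lam y) else 0))%R))%E.

Definition schur_set2 n (X : 'I_n -> completeNormedModType C)
    (A : forall i j : 'I_n, op (X j) (X i)) (k j : 'I_n) : set C :=
  spectrum (A k k) `|` spectrum (A j j) `|`
  [set lam | ~ spectrum (A k k) lam /\ ~ spectrum (A j j) lam /\
             (1 <= schurR A k j lam)%E].

Definition schur_set n (X : 'I_n -> completeNormedModType C)
    (A : forall i j : 'I_n, op (X j) (X i)) (k : 'I_n) : set C :=
  [set lam | exists j : 'I_n, j != k /\ schur_set2 A k j lam].

End Defs.

(* Main.v *)
Require Import Defs.
From HB Require Import structures.
From mathcomp Require Import all_boot all_order all_algebra.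
From mathcomp Require Import all_classical all_reals all_analysis.
From mathcomp Require Import complex.
From mathcomp Require Import ring lra.
From Stdlib Require Import ClassicalEpsilon.
Set Implicit Arguments. Unset Strict Implicit. Unset Printing Implicit Defensive.
Import Order.TTheory GRing.Theory Num.Theory.
Local Open Scope ring_scope.
Local Open Scope classical_set_scope.
Local Open Scope complex_scope.

Section S.
Variable R : realType.
Local Notation C := R[i].
Definition rn (X : normedModType C) (x : X) : R := complex.Re `|x|.
Lemma realC (z : C) : 0 <= z -> z = (complex.Re z)%:C.
Proof. by move=> z0; rewrite RRe_real // ger0_real. Qed.
Lemma Re_ge0 (z : C) : 0 <= z -> 0 <= complex.Re z.
Proof. by move=> z0; rewrite -ler0c -realC. Qed.

Lemma rnE (X : normedModType C) (x : X) : `|x| = (rn x)%:C.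
Proof. exact: realC. Qed.

Lemma near_ooP (P : nat -> Prop) : (\forall t \near \oo, P t) <-> exists N, forall t, (N <= t)%N -> P t.
Proof.
split.
- move=> [N _ h]. exists N => t Nt. exact: h.
- move=> [N h]. by exists N.
Qed.

Lemma cvg_rnP (X : normedModType C) (u : nat -> X) (x : X) :
  u @ \oo --> x <-> forall e : R, 0 < e -> exists N, forall t, (N <= t)%N -> rn (x - u t) < e.
Proof.
rewrite cvgrPdist_lt; split.
- move=> h e e0. have /h : 0 < e%:C by rewrite ltcR.
  move/near_ooP => [N hN]; exists N => t /hN. by rewrite rnE ltcR.
- move=> h eps eps0. have e0 : 0 < complex.Re eps by rewrite -ltcR -realC // ltW.
  have [N hN] := h _ e0. apply/near_ooP; exists N => t /hN.
  by rewrite -ltcR -rnE -realC // ltW.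
Qed.

Lemma cauchy_rn (X : completeNormedModType C) (u : nat -> X) :
  (forall e : R, 0 < e -> exists N, forall t, (N <= t)%N -> rn (u N - u t) < e) ->
  exists x : X, u @ \oo --> x.
Proof.
move=> h.
have : cvgn u.
  apply: cauchy_cvg. apply: (cauchy_exP (T:=X)) => eps eps0.
  have e0 : 0 < complex.Re eps by rewrite -ltcR -realC // ltW.
  have [N hN] := h _ e0. exists (u N).
  apply/near_ooP; exists N => t /hN. rewrite -ball_normE /ball_ /=.
  by rewrite -ltcR -rnE -realC // ltW.
move=> c; exists (limn u); exact: c.
Qed.

Lemma geo_small (q e : R) : 0 <= q -> q < 1 -> 0 < e -> exists N, q ^+ N < e.
Proof.
move=> q0 q1 e0.
have : `|q| < 1 by rewrite ger0_norm.
move/cvg_expr; rewrite cvgrPdist_lt => /(_ e e0) /near_ooP [N hN].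
exists N; have := hN N (leqnn N).
by rewrite sub0r normrN ger0_norm // exprn_ge0.
Qed.

Lemma rn_ge0 (X : normedModType C) (x : X) : 0 <= rn x.
Proof. by rewrite -ler0c -rnE. Qed.

Lemma rnD (X : normedModType C) (x y : X) : rn (x + y) <= rn x + rn y.
Proof. by rewrite -lecR rmorphD /= -!rnE ler_normD. Qed.

Lemma rnB (X : normedModType C) (x y : X) : rn (x - y) = rn (y - x).
Proof. by rewrite /rn distrC. Qed.

Lemma rn0 (X : normedModType C) : rn (0 : X) = 0.
Proof. by rewrite /rn normr0. Qed.

Lemma rn_eq0 (X : normedModType C) (x : X) : rn x = 0 -> x = 0.
Proof. by move=> h; apply/normr0_eq0; rewrite rnE h. Qed.

Lemma rn_sum (X : normedModType C) (I : finType) (P : pred I) (f : I -> X) :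
  rn (\sum_(i | P i) f i) <= \sum_(i | P i) rn (f i).
Proof.
elim/big_rec2: _ => [|i y1 y2 _ h]; first by rewrite rn0.
by apply: le_trans (rnD _ _) _; rewrite lerD2l.
Qed.

Lemma rnZ (X : normedModType C) (a : C) (x : X) : rn (a *: x) = complex.Re `|a| * rn x.
Proof. by apply: complexI; rewrite rmorphM /= -rnE -realC // normrZ. Qed.

Lemma rnN (X : normedModType C) (x : X) : rn (- x) = rn x.
Proof. by rewrite /rn normrN. Qed.

Lemma eq_small (X : normedModType C) (x y : X) :
  (forall e : R, 0 < e -> rn (x - y) < e) -> x = y.
Proof.
move=> h; apply/eqP; rewrite -subr_eq0; apply/eqP/rn_eq0.
apply/eqP; rewrite eq_le rn_ge0 andbT.
apply/ler_addgt0Pr => e e0; rewrite add0r; exact/ltW/h.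
Qed.

Section Fix.
Variable n : nat.
Variable X : 'I_n -> completeNormedModType C.
Definition sn (u : forall i, X i) : R := \sum_i rn (u i).
Definition dif (u v : forall i, X i) : forall i, X i := fun i => u i - v i.

Lemma sn_ge0 u : 0 <= sn u.
Proof. by apply: sumr_ge0 => i _; exact: rn_ge0. Qed.

Lemma sn_tri a b c : sn (dif a c) <= sn (dif a b) + sn (dif b c).
Proof.
rewrite /sn -big_split /=; apply: ler_sum => i _.
by rewrite /dif -(subrKA (b i)); apply: rnD.
Qed.

Lemma rn_le_sn u i : rn (u i) <= sn u.
Proof.
rewrite /sn (bigD1 i) //= lerDl. by apply: sumr_ge0 => k _; exact: rn_ge0.
Qed.

Lemma fixpoint (Phi : (forall i, X i) -> (forall i, X i)) (q : R) :
  0 <= q -> q < 1 ->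
  (forall u v, sn (dif (Phi u) (Phi v)) <= q * sn (dif u v)) ->
  exists u, forall i, Phi u i = u i.
Proof.
move=> q0 q1 hPhi.
pose s := fun m => iter m Phi (fun i => 0).
pose d0 := sn (dif (s 1%N) (s 0%N)).
have d0ge : 0 <= d0 by apply: sn_ge0.
have hd : forall m, sn (dif (s m.+1) (s m)) <= q ^+ m * d0.
  elim=> [|m ih]; first by rewrite expr0 mul1r.
  apply: le_trans (hPhi _ _) _.
  by rewrite exprS -mulrA ler_wpM2l.
have q1' : 0 < 1 - q by rewrite subr_gt0.
have hc : forall m k, sn (dif (s (k + m)%N) (s m)) <= d0 * (q ^+ m - q ^+ (k + m)) / (1 - q).
  move=> m; elim=> [|k ih].
    rewrite add0n subrr mulr0 mul0r.
    by rewrite /sn big1 // => i _; rewrite /dif subrr rn0.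
  apply: le_trans (sn_tri _ (s (k + m)%N) _) _.
  apply: le_trans (lerD (hd _) ih) _.
  rewrite addSn exprS ler_pdivlMr // mulrDl divfK ?gt_eqF //.
  apply: le_trans (_ : q ^+ (k + m) * d0 * (1 - q) + d0 * (q ^+ m - q ^+ (k + m)) <= _).
    by rewrite lerD2r.
  by rewrite le_eqVlt; apply/orP; left; apply/eqP; ring.
have hc2 : forall m k, sn (dif (s (k + m)%N) (s m)) <= d0 * q ^+ m / (1 - q).
  move=> m k; apply: le_trans (hc m k) _.
  rewrite ler_pM2r ?invr_gt0 // ler_wpM2l // lerBlDr lerDl.
  exact: exprn_ge0.
have hcoord : forall i, exists x : X i, (fun t => s t i) @ \oo --> x.
  move=> i; apply: cauchy_rn => e e0.
  have [N hN] : exists N, d0 * q ^+ N / (1 - q) < e.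
    have e'0 : 0 < e * (1 - q) / (d0 + 1) by rewrite !divr_gt0 ?mulr_gt0 // ltr_wpDl.
    have [N hN] := geo_small q0 q1 e'0.
    exists N; rewrite ltr_pdivrMr //.
    apply: le_lt_trans (_ : _ <= (d0 + 1) * q ^+ N) _.
      by rewrite ler_wpM2r ?exprn_ge0 // lerDl.
    by rewrite -ltr_pdivlMl ?ltr_wpDl // mulrC.
  exists N => t Nt; rewrite rnB.
  have -> : t = ((t - N) + N)%N by rewrite subnK.
  apply: le_lt_trans (rn_le_sn (dif _ _) i) _.
  exact: le_lt_trans (hc2 _ _) hN.
pose u := fun i => projT1 (cid (hcoord i)).
have hu : forall i, (fun t => s t i) @ \oo --> u i by move=> i; exact: (projT2 (cid (hcoord i))).
exists u => i; apply/esym/eq_small => e e0.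
pose e' := e / (n%:R + 2).
have n2 : 0 < n%:R + 2 :> R by rewrite ltr_wpDl.
have e'0 : 0 < e' by rewrite divr_gt0.
have hN : forall k, exists N, forall t, (N <= t)%N -> rn (u k - s t k) < e'.
  move=> k; exact: (proj1 (cvg_rnP _ _) (hu k) e' e'0).
pose N := fun k => projT1 (cid (hN k)).
have hNk : forall k t, (N k <= t)%N -> rn (u k - s t k) < e'.
  by move=> k; exact: (projT2 (cid (hN k))).
pose M := (\max_k N k)%N.
have hM : forall k, rn (u k - s M k) < e'.
  by move=> k; apply: hNk; apply: leq_bigmax.
have hM1 : rn (u i - s M.+1 i) < e'.
  by apply: hNk; apply: leq_trans (leq_bigmax i) _.
have hsn : sn (dif (s M) u) <= n%:R * e'.
  apply: le_trans (_ : \sum_(k < n) e' <= _).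
    by apply: ler_sum => k _; rewrite /dif rnB; apply: ltW.
  by rewrite sumr_const card_ord mulr_natl.
have -> : u i - Phi u i = (u i - s M.+1 i) + (Phi (s M) i - Phi u i).
  by rewrite /= addrA subrK.
apply: le_lt_trans (rnD _ _) _.
apply: (@lt_le_trans _ _ (e' + n%:R * e')).
  rewrite ltr_leD //. apply: le_trans (rn_le_sn (dif (Phi (s M)) (Phi u)) i) _.
  apply: le_trans (hPhi _ _) _.
  apply: le_trans (_ : 1 * sn (dif (s M) u) <= _).
    by rewrite ler_wpM2r ?sn_ge0 // ltW.
  by rewrite mul1r.
rewrite /e' -{1}(mul1r (e / _)) -mulrDl mulrA ler_pdivrMr // mulrC ler_wpM2l ?(ltW e0) //.
lra.
Qed.
End Fix.
End S.
Lemma zmod4 (V : zmodType) (a b c d : V) : a - (b + c) + (b - d) = a - (d + c).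
Proof. rewrite opprD addrA addrA [a - b - c + b]addrAC subrK opprD addrA. by rewrite addrAC. Qed.

Lemma zmodx (V : zmodType) (a b c d : V) : a - c - (b - d) = a - b - (c - d).
Proof. rewrite [in LHS]opprB [in RHS]opprB [in LHS]addrACA [in RHS]addrACA. by rewrite (addrC (- c)). Qed.

Section Alg.
Local Unset Implicit Arguments.
Variable R : realType.
Local Notation C := R[i].
Variable n : nat.
Variable X : 'I_n -> completeNormedModType C.
Variable l : 'I_n.
Variable B : forall i j : 'I_n, X j -> X i.
Hypothesis Badd : forall i j u v, B i j (u + v) = B i j u + B i j v.

Lemma B0 i j : B i j 0 = 0.
Proof. by apply: (addrI (B i j 0)); rewrite addr0 -Badd addr0. Qed.

Lemma BN i j u : B i j (- u) = - B i j u.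
Proof. by apply/eqP; rewrite -subr_eq0 opprK -Badd addNr B0. Qed.

Lemma BB i j u v : B i j (u - v) = B i j u - B i j v.
Proof. by rewrite Badd BN. Qed.

Lemma Bsum i j (I : finType) (P : pred I) (f : I -> X j) :
  B i j (\sum_(k | P k) f k) = \sum_(k | P k) B i j (f k).
Proof. by rewrite (big_morph (B i j) (Badd i j) (B0 i j)). Qed.

Definition Tz (z : forall i, X i) : forall i, X i :=
  fun i => z i - \sum_(j | j != i) B i j (z j).

Definition Kop (i j : 'I_n) (y : X j) : X i :=
  B i l (B l j y) + (if i != j then B i j y else 0).

Lemma schur_id (z : forall i, X i) (i : 'I_n) : i != l ->
  Tz z i + B i l (Tz z l) = z i - \sum_(j | j != l) Kop i j (z j).
Proof.
move=> il.
rewrite /Tz /Kop BB Bsum big_split /=.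
rewrite (bigD1 l) /=; last by rewrite eq_sym.
rewrite -big_mkcondr /=.
have -> : \sum_(j | (j != l) && (i != j)) B i j (z j) = \sum_(j | (j != i) && (j != l)) B i j (z j).
  by apply: eq_bigl => j; rewrite andbC eq_sym.
exact: zmod4.
Qed.

Lemma Kadd i j u v : Kop i j (u + v) = Kop i j u + Kop i j v.
Proof.
rewrite /Kop !Badd; case: (i != j); last by rewrite !addr0.
by rewrite addrACA.
Qed.

Lemma Ksum i j (I : finType) (P : pred I) (f : I -> X j) :
  Kop i j (\sum_(k | P k) f k) = \sum_(k | P k) Kop i j (f k).
Proof.
have K0 : Kop i j 0 = 0 by rewrite /Kop !B0; case: (i != j); rewrite addr0.
by rewrite (big_morph (Kop i j) (Kadd i j) K0).
Qed.

Lemma KB i j u v : Kop i j (u - v) = Kop i j u - Kop i j v.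
Proof. by rewrite /Kop !BB; case: (i != j); rewrite ?addr0 // opprD addrACA. Qed.

Definition Phi (w u : forall i, X i) : forall i, X i :=
  fun i => if i == l then 0 else w i + \sum_(j | j != l) Kop i j (u j).

Lemma sn_split (u : forall i, X i) : sn u = rn (u l) + \sum_(i | i != l) rn (u i).
Proof. by rewrite /sn (bigD1 l). Qed.

Variable q : R.
Hypothesis q0 : 0 <= q.
Hypothesis q1 : q < 1.
Hypothesis Kbnd : forall j, j != l -> forall y, \sum_(i | i != l) rn (Kop i j y) <= q * rn y.
Variable cB : R.
Hypothesis cB0 : 0 <= cB.
Hypothesis Bbnd : forall i j y, rn (B i j y) <= cB * rn y.

Lemma Phi_contr w u v : sn (dif (Phi w u) (Phi w v)) <= q * sn (dif u v).
Proof.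
rewrite sn_split /dif /Phi eqxx subrr rn0 add0r.
under eq_bigr => i il do rewrite (negbTE il) opprD addrACA subrr add0r -sumrB.
apply: le_trans (_ : \sum_(i | i != l) \sum_(j | j != l) rn (Kop i j (u j - v j)) <= _).
  apply: ler_sum => i _; apply: le_trans; first exact: rn_sum.
  by apply: ler_sum => j _; rewrite KB.
rewrite exchange_big /=.
apply: le_trans (_ : \sum_(j | j != l) q * rn (u j - v j) <= _).
  by apply: ler_sum => j jl; apply: Kbnd.
rewrite -mulr_sumr ler_wpM2l // [X in _ <= X]sn_split lerDr.
exact: rn_ge0.
Qed.

Definition wv (y : forall i, X i) : forall i, X i := fun i => y i + B i l (y l).

Lemma Tz_exists y : exists z, forall i, Tz z i = y i.
Proof.
have [z' hz'] := fixpoint q0 q1 (Phi_contr (wv y)).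
pose z := fun i => if i == l then y i + \sum_(j | j != l) B i j (z' j) else z' i.
have zz : forall j, j != l -> z j = z' j by move=> j jl; rewrite /z (negbTE jl).
have hl : Tz z l = y l.
  rewrite /Tz {1}/z eqxx.
  rewrite [X in _ - X](eq_bigr (fun j => B l j (z' j))); last by move=> j jl; rewrite zz.
  by rewrite addrK.
exists z => i; case: (eqVneq i l) => [->|il]; first exact: hl.
have := schur_id z i il; rewrite hl => h.
apply: (addIr (B i l (y l))); rewrite h zz //.
have := hz' i; rewrite /Phi (negbTE il) => <-.
rewrite [X in _ - X](eq_bigr (fun j => Kop i j (z' j))); last by move=> j jl; rewrite zz.
by rewrite addrK.
Qed.

Lemma Tz_apriori : exists M, 0 <= M /\
  forall z y, (forall i, Tz z i = y i) -> sn z <= M * sn y.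
Proof.
have q1' : 0 < 1 - q by rewrite subr_gt0.
pose D := n%:R * (1 + cB).
have D0 : 0 <= D by rewrite mulr_ge0 // addr_ge0.
exists (1 + (1 + cB) * (D / (1 - q))); split.
  by rewrite addr_ge0 // mulr_ge0 ?addr_ge0 // divr_ge0 // ltW.
move=> z y hy.
pose z'' := fun i => if i == l then 0 else z i.
pose zero := fun i : 'I_n => (0 : X i).
have hfix : forall i, Phi (wv y) z'' i = z'' i.
  move=> i; rewrite /Phi /z''; case: (eqVneq i l) => [//|il].
  under eq_bigr => j jl do rewrite (negbTE jl).
  have := schur_id z i il; rewrite !hy /wv => ->.
  by rewrite subrK.
have K0 : forall i j, Kop i j 0 = 0.
  by move=> i j; rewrite /Kop !B0; case: (i != j); rewrite addr0.
have sn0 : forall u, sn (dif u zero) = sn u.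
  by move=> u; apply: eq_bigr => i _; rewrite /dif /zero subr0.
have hPhi0 : forall i, rn (Phi (wv y) zero i) <= (1 + cB) * sn y.
  move=> i; rewrite /Phi; case: (i == l); first by rewrite rn0 mulr_ge0 ?addr_ge0 ?sn_ge0.
  rewrite big1; last by move=> j _; rewrite /zero K0.
  rewrite addr0 /wv; apply: le_trans (rnD _ _) _.
  rewrite mulrDl mul1r; apply: lerD; first exact: rn_le_sn.
  apply: le_trans (Bbnd _ _ _) _; rewrite ler_wpM2l //; exact: rn_le_sn.
have hsnPhi0 : sn (Phi (wv y) zero) <= D * sn y.
  apply: le_trans (_ : \sum_(i < n) ((1 + cB) * sn y) <= _).
    by apply: ler_sum => i _; apply: hPhi0.
  by rewrite sumr_const card_ord /D -mulrA mulr_natl.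
have A1 : sn z'' <= q * sn z'' + D * sn y.
  rewrite -{1}sn0.
  have -> : sn (dif z'' zero) = sn (dif (Phi (wv y) z'') zero).
    by apply: eq_bigr => i _; rewrite /dif hfix.
  apply: le_trans (sn_tri _ (Phi (wv y) zero) _) _.
  apply: lerD; last by rewrite sn0.
  apply: le_trans (Phi_contr _ _ _) _.
  by rewrite sn0.
have A2 : sn z'' <= D / (1 - q) * sn y.
  rewrite mulrAC ler_pdivlMr // mulrBr mulr1; nra.
have Sz : sn z'' = \sum_(i | i != l) rn (z i).
  rewrite sn_split /z'' eqxx rn0 add0r.
  by apply: eq_bigr => i il; rewrite (negbTE il).
have zl : z l = y l + \sum_(j | j != l) B l j (z j).
  by rewrite -(hy l) /Tz subrK.
have A3 : rn (z l) <= sn y + cB * sn z''.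
  rewrite zl; apply: le_trans (rnD _ _) _; apply: lerD; first exact: rn_le_sn.
  apply: le_trans; first exact: rn_sum.
  rewrite Sz mulr_sumr; apply: ler_sum => j _; exact: Bbnd.
have A4 : sn z <= sn y + (1 + cB) * sn z''.
  by rewrite sn_split -Sz mulrDl mul1r addrCA addrC lerD2r.
have snz0 : 0 <= sn z'' by apply: sn_ge0.
have sny0 : 0 <= sn y by apply: sn_ge0.
set t := D / (1 - q) in A2 *.
clearbody t.
have P1 : 0 <= cB * (t * sn y - sn z'') by rewrite mulr_ge0 // subr_ge0.
nra.
Qed.
End Alg.

Section Lin.
Variable R : realType.
Local Notation C := R[i].

Lemma ReMr (a : C) (b : R) : complex.Re (a * b%:C) = complex.Re a * b.
Proof. by case: a => a1 a2 /=; rewrite !mulr0 subr0. Qed.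

Lemma le_bound (c a : C) (b : R) : c <= a * b%:C -> complex.Re c <= complex.Re a * b.
Proof. by rewrite lecE => /andP[_]; rewrite ReMr. Qed.

Variables Y Z : completeNormedModType C.
Variable T : op Y Z.
Hypothesis lT : linear_op T.

Lemma ldom0 : dom T 0. Proof. by case: lT. Qed.
Lemma ldomD x y : dom T x -> dom T y -> dom T (x + y). Proof. by case: lT => _ [h _]; apply: h. Qed.
Lemma ldomZ a x : dom T x -> dom T (a *: x). Proof. by case: lT => _ [_ [h _]]; apply: h. Qed.
Lemma lappD x y : dom T x -> dom T y -> app T (x + y) = app T x + app T y.
Proof. by case: lT => _ [_ [_ [h _]]]; apply: h. Qed.
Lemma lappZ a x : dom T x -> app T (a *: x) = a *: app T x.
Proof. by case: lT => _ [_ [_ [_ h]]]; apply: h. Qed.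
Lemma ldomN x : dom T x -> dom T (- x).
Proof. by move=> h; rewrite -scaleN1r; apply: ldomZ. Qed.
Lemma lappN x : dom T x -> app T (- x) = - app T x.
Proof. by move=> h; rewrite -scaleN1r lappZ // scaleN1r. Qed.
Lemma ldomB x y : dom T x -> dom T y -> dom T (x - y).
Proof. by move=> hx hy; apply: ldomD => //; apply: ldomN. Qed.
Lemma lappB x y : dom T x -> dom T y -> app T (x - y) = app T x - app T y.
Proof. by move=> hx hy; rewrite lappD ?lappN //; apply: ldomN. Qed.
Lemma lapp0 : app T 0 = 0.
Proof. by rewrite -(scale0r (0 : Y)) lappZ ?scale0r //; apply: ldom0. Qed.
End Lin.

Section Res.
Variable R : realType.
Local Notation C := R[i].
Variable Y : completeNormedModType C.
Variable S : op Y Y.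
Hypothesis lS : linear_op S.
Variable lam : C.
Variable Rs : Y -> Y.
Hypothesis hR : is_resolvent S lam Rs.

Lemma res_dom y : dom S (Rs y). Proof. by case: hR => h _; apply: h. Qed.
Lemma res_eq y : lam *: Rs y - app S (Rs y) = y. Proof. by case: hR => _ [h _]; apply: h. Qed.
Lemma res_inv x : dom S x -> Rs (lam *: x - app S x) = x. Proof. by case: hR => _ [_ [h _]]; apply: h. Qed.
Lemma res_app y : app S (Rs y) = lam *: Rs y - y.
Proof. by rewrite -{3}(res_eq y) opprB addrC subrK. Qed.

Lemma res_add y1 y2 : Rs (y1 + y2) = Rs y1 + Rs y2.
Proof.
have d1 := res_dom y1; have d2 := res_dom y2.
rewrite -{1}(res_eq y1) -{1}(res_eq y2).
rewrite -[RHS](res_inv (ldomD lS d1 d2)).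
congr Rs; rewrite scalerDr lappD //; rewrite opprD.
by rewrite addrACA.
Qed.

Lemma res_scale (a : C) y : Rs (a *: y) = a *: Rs y.
Proof.
have d1 := res_dom y.
rewrite -{1}(res_eq y) -[RHS](res_inv (ldomZ lS a d1)).
congr Rs; by rewrite lappZ // scalerBr !scalerA mulrC.
Qed.

Lemma res_bnd : exists c : R, 0 <= c /\ forall y, rn (Rs y) <= c * rn y.
Proof.
case: hR => _ [_ [_ [M hM]]].
exists `|complex.Re M|; split => // y.
have := hM y; rewrite !rnE => /le_bound /le_trans; apply.
by rewrite ler_wpM2r ?rn_ge0 // real_ler_norm // num_real.
Qed.
End Res.

Section Opn.
Variable R : realType.
Local Notation C := R[i].
Variables Y Z : completeNormedModType C.
Variable f : Y -> Z.
Hypothesis fZ : forall (a : C) y, f (a *: y) = a *: f y.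

Lemma f0 : f 0 = 0.
Proof. by rewrite -(scale0r (0 : Y)) fZ scale0r. Qed.

Lemma opnorm_ge0 : (0 <= opnorm f)%E.
Proof.
apply: ereal_sup_ubound; exists 0; last by rewrite f0 normr0.
by rewrite /= normr0 ler01.
Qed.

Lemma opnorm_le y : ((rn (f y))%:E <= opnorm f * (rn y)%:E)%E.
Proof.
have [->|y0] := eqVneq y 0; first by rewrite f0 !rn0 mule0.
have t0 : 0 < rn y.
  rewrite lt_neqAle rn_ge0 andbT eq_sym; apply/eqP => h; move/eqP: y0; apply.
  exact: rn_eq0.
pose y' := ((rn y)^-1)%:C *: y.
have ny' : rn y' = 1.
  rewrite /y' rnZ ger0_norm ?ler0c ?invr_ge0 ?ltW //= mulVf ?gt_eqF //.
have h : ((rn (f y'))%:E <= opnorm f)%E.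
  apply: ereal_sup_ubound; exists y' => //=.
  by rewrite rnE ny'.
have e1 : rn (f y') = (rn y)^-1 * rn (f y).
  by rewrite /y' fZ rnZ ger0_norm //= ler0c invr_ge0 ltW.
rewrite e1 in h.
have -> : rn (f y) = (rn y)^-1 * rn (f y) * rn y.
  by rewrite mulrAC mulVf ?gt_eqF // mul1r.
rewrite EFinM; have hh := lee_wpmul2r (x := (rn y)%:E) _ h.
by apply: hh; rewrite lee_fin rn_ge0.
Qed.
End Opn.

Lemma unif_bound (R : realType) (I : finType) (P : I -> R -> Prop) :
  (forall i c c', P i c -> c <= c' -> P i c') ->
  (forall i, exists c, 0 <= c /\ P i c) -> exists c, 0 <= c /\ forall i, P i c.
Proof.
move=> mono h.
pose c := fun i => projT1 (cid (h i)).
have hc : forall i, 0 <= c i /\ P i (c i) by move=> i; exact: (projT2 (cid (h i))).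
exists (\sum_i c i); split; first by apply: sumr_ge0 => i _; case: (hc i).
move=> i; apply: (mono i (c i)); first by case: (hc i).
rewrite (bigD1 i) //= lerDl; apply: sumr_ge0 => k _; by case: (hc k).
Qed.

Section Main.
Local Unset Implicit Arguments.
Variable R : realType.
Local Notation C := R[i].
Variable n : nat.
Variable X : 'I_n -> completeNormedModType C.
Variable A : forall i j : 'I_n, op (X j) (X i).
Variable lam : C.
Variable l : 'I_n.
Hypothesis hlin : forall i j, linear_op (A i j).
Hypothesis hrb : forall i j, i != j -> rel_bounded (A i j) (A j j).
Hypothesis hres : forall j, exists Rs, is_resolvent (A j j) lam Rs.
Hypothesis hsch : forall j, j != l -> (schurR A l j lam < 1)%E.

Local Notation r j := (resolvent (A j j) lam).

Lemma hr j : is_resolvent (A j j) lam (r j).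
Proof. exact: epsilon_spec (hres j). Qed.

Lemma dA i j y : dom (A i j) (r j y).
Proof.
have [e|ij] := eqVneq i j; first by subst i; exact: (res_dom (hr j) y).
by case: (hrb i j ij) => h _; apply: h; exact: (res_dom (hr j) y).
Qed.

Definition Bm (i j : 'I_n) (y : X j) : X i := app (A i j) (r j y).

Lemma Bm_add i j u v : Bm i j (u + v) = Bm i j u + Bm i j v.
Proof. by rewrite /Bm (res_add (hlin j j) (hr j)) (lappD (hlin i j) (dA i j u) (dA i j v)). Qed.

Lemma Bm_scale i j (a : C) u : Bm i j (a *: u) = a *: Bm i j u.
Proof. by rewrite /Bm (res_scale (hlin j j) (hr j)) (lappZ (hlin i j) a (dA i j u)). Qed.


Lemma r_unif : exists cR, 0 <= cR /\ forall j y, rn (r j y) <= cR * rn y.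
Proof.
apply: (unif_bound (P := fun j c => forall y : X j, rn (r j y) <= c * rn y)).
  move=> j c c' h cc' y; apply: le_trans (h y) _; apply: ler_wpM2r => //; exact: rn_ge0.
move=> j; exact: (res_bnd (hr j)).
Qed.

Lemma Bm_unif : exists cB, 0 <= cB /\ forall i j y, rn (Bm i j y) <= cB * rn y.
Proof.
have [cR [cR0 hcR]] := r_unif.
pose cd := complex.Re `|lam| * cR + 1.
have cd0 : 0 <= cd by rewrite addr_ge0 // mulr_ge0 // Re_ge0.
have hd : forall j y, rn (Bm j j y) <= cd * rn y.
  move=> j y; rewrite /Bm (res_app (hr j)).
  apply: le_trans (rnD _ _) _; rewrite rnN rnZ /cd mulrDl mul1r lerD2r -mulrA.
  by rewrite ler_wpM2l ?Re_ge0.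
have [cB [cB0 hcB]] : exists cB, 0 <= cB /\ forall p : 'I_n * 'I_n, forall y : X p.2, rn (Bm p.1 p.2 y) <= cB * rn y.
  apply: (unif_bound (P := fun p c => forall y : X p.2, rn (Bm p.1 p.2 y) <= c * rn y)).
    move=> p c c' h cc' y; apply: le_trans (h y) _; apply: ler_wpM2r => //; exact: rn_ge0.
  move=> [i j] /=.
  have [e|ij] := eqVneq i j; first by subst i; exists cd; split => //; exact: hd.
  case: (hrb i j ij) => _ [a [b [a0 [b0 hab]]]].
  exists (complex.Re a * cR + complex.Re b * cd); split.
    by rewrite addr_ge0 // mulr_ge0 // Re_ge0.
  move=> y; have := hab _ (res_dom (hr j) y).
  rewrite !rnE (realC a0) (realC b0) -!rmorphM -rmorphD lecR => /le_trans; apply.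
  rewrite mulrDl -!mulrA; apply: lerD; rewrite ler_wpM2l ?Re_ge0 //.
  exact: hd.
by exists cB; split => // i j y; apply: (hcB (i, j)).
Qed.

Local Notation K := (Kop R n X l Bm).

Lemma KZ i j (a : C) y : K i j (a *: y) = a *: K i j y.
Proof.
rewrite /Kop !Bm_scale scalerDr; congr (_ + _).
by case: (i != j); rewrite ?scaler0 // Bm_scale.
Qed.

Definition sj j := fine (schurR A l j lam).

Lemma sj_prop j : j != l -> [/\ 0 <= sj j, sj j < 1 &
  forall y, \sum_(i | i != l) rn (K i j y) <= sj j * rn y].
Proof.
move=> jl; have hs := hsch j jl.
have e : schurR A l j lam = (\sum_(i | i != l) opnorm (K i j))%E by [].
have ge0 : forall i, (0 <= opnorm (K i j))%E by move=> i; apply: opnorm_ge0; exact: KZ.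
have S0 : (0 <= schurR A l j lam)%E by rewrite e; apply: sume_ge0 => i _; exact: ge0.
have fin : schurR A l j lam \is a fin_num.
  by rewrite ge0_fin_numE // (lt_trans hs) // ltry.
have es : schurR A l j lam = (sj j)%:E by rewrite /sj fineK.
split.
- by rewrite -lee_fin -es.
- by rewrite -lte_fin -es.
move=> y; rewrite -lee_fin -sumEFin EFinM -es e ge0_sume_distrl; last by move=> i _; exact: ge0.
by apply: lee_sum => i _; apply: opnorm_le; exact: KZ.
Qed.

Definition qq := \big[Order.max/0]_(j | j != l) sj j.

Lemma qq0 : 0 <= qq.
Proof. by rewrite /qq; elim/big_rec: _ => // j x _ hx; rewrite le_max hx orbT. Qed.

Lemma qq1 : qq < 1.
Proof. by apply: bigmax_lt => //= j jl; case: (sj_prop j jl). Qed.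

Lemma Kbnd j : j != l -> forall y, \sum_(i | i != l) rn (K i j y) <= qq * rn y.
Proof.
move=> jl y; case: (sj_prop j jl) => _ _ h; apply: le_trans (h y) _.
apply: ler_wpM2r; first exact: rn_ge0.
exact: (le_bigmax_cond (P := fun j => j != l) 0 sj jl).
Qed.

Lemma mx_identity (z : forall i, X i) i :
  lam *: r i (z i) - mx_app A (fun j => r j (z j)) i = Tz R n X Bm z i.
Proof.
rewrite /mx_app /Tz (bigD1 i) //= (res_app (hr i)) opprD addrA.
congr (_ - _); by rewrite opprB addrC subrK.
Qed.

Lemma TzB (u v : forall i, X i) i : Tz R n X Bm (dif u v) i = Tz R n X Bm u i - Tz R n X Bm v i.
Proof.
rewrite /Tz /dif.
under eq_bigr => j _ do rewrite (BB R n X Bm Bm_add).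
by rewrite sumrB zmodx.
Qed.

Lemma main_res : exists Rs, mx_is_resolvent A lam Rs.
Proof.
have [cB [cB0 hcB]] := Bm_unif.
have [cR [cR0 hcR]] := r_unif.
have [M [M0 hM]] := Tz_apriori R n X l Bm Bm_add qq qq0 qq1 Kbnd cB cB0 hcB.
have hex := Tz_exists R n X l Bm Bm_add qq qq0 qq1 Kbnd.
pose Z := fun y => projT1 (cid (hex y)).
have hZ : forall y i, Tz R n X Bm (Z y) i = y i by move=> y; exact: (projT2 (cid (hex y))).
pose Rs := fun (y : forall i, X i) => (fun j => r j (Z y j)) : forall i, X i.
exists Rs; split; [|split; [|split]].
- move=> y i; exact: (res_dom (hr i) _).
- by move=> y i; rewrite /Rs mx_identity hZ.
- move=> x hx.
  pose z := fun j => lam *: x j - app (A j j) (x j).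
  have xz : x = fun j => r j (z j).
    by apply: functional_extensionality_dep => j; rewrite /z (res_inv (hr j) (hx j)).
  set y := fun i => _.
  have Tzz : forall i, Tz R n X Bm z i = y i.
    by move=> i; rewrite -mx_identity /y [in RHS]xz.
  have hd : forall i, Tz R n X Bm (dif (Z y) z) i = (fun i => 0) i.
    by move=> i; rewrite TzB hZ Tzz subrr.
  have := hM _ _ hd.
  have -> : sn (fun i : 'I_n => (0 : X i)) = 0 by rewrite /sn big1 // => i _; rewrite rn0.
  rewrite mulr0 => hs.
  have ZE : forall j, Z y j = z j.
    move=> j; apply/eqP; rewrite -subr_eq0; apply/eqP/rn_eq0.
    apply/eqP; rewrite eq_le rn_ge0 andbT.
    exact: le_trans (rn_le_sn (dif (Z y) z) j) hs.
  rewrite [RHS]xz; apply: functional_extensionality_dep => j.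
  by rewrite /Rs ZE.
- exists (cR * M)%:C => y.
  have sE : forall u : forall i, X i, sumnorm u = (sn u)%:C.
    by move=> u; rewrite /sumnorm /sn rmorph_sum; apply: eq_bigr => i _; rewrite rnE.
  rewrite !sE -rmorphM lecR.
  apply: le_trans (_ : cR * sn (Z y) <= _).
    rewrite /sn mulr_sumr; apply: ler_sum => j _; exact: hcR.
  by rewrite -mulrA ler_wpM2l // hM.
Qed.
End Main.

Theorem theorem4p1 (R : realType) (n : nat)
    (X : 'I_n -> completeNormedModType R[i])
    (A : forall i j : 'I_n, op (X j) (X i)) :
  (2 <= n)%N ->
  (forall i j, linear_op (A i j)) ->
  (forall i, closed_op (A i i)) ->
  (forall i j, i != j -> rel_bounded (A i j) (A j j)) ->
  (forall k (hk : (k <= n)%N), (2 <= k)%N -> mx_closed (cornermx hk A)) ->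
  (forall k (hk : (k <= n)%N), (2 <= k)%N -> (k <= n.-1)%N ->
     forall kk : 'I_n, kk.+1 = k ->
     exists lam : R[i], ~ spectrum (A kk kk) lam /\ ~ mx_spectrum (cornermx hk A) lam) ->
  forall l : 'I_n, l.+1 = n ->
  mx_spectrum A `<=` schur_set A l.
Proof.
move=> n2 hlin _ hrb _ _ l hl lam hsp.
apply: contrapT => hn; apply: hsp.
have n0 : (0 < n)%N by apply: leq_trans n2.
pose j0 := Ordinal n0.
have j0l : j0 != l.
  apply/eqP => e; move: hl n2; rewrite -e /= => <-; by [].
have h2 : forall j, j != l ->
    [/\ ~ spectrum (A l l) lam, ~ spectrum (A j j) lam & ~ (1 <= schurR A l j lam)%E].
  move=> j jl; split => h; apply: (hn); exists j; split => //.
  - by left; left.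
  - by left; right.
  - right; split; [|split] => //.
    + by move=> hs; apply: (hn); exists j; split => //; left; left.
    + by move=> hs; apply: (hn); exists j; split => //; left; right.
apply: (main_res R n X A lam l hlin hrb).
- move=> j; have [e|jl] := eqVneq j l.
    subst j; case: (h2 j0 j0l) => h _ _; exact: contrapT h.
  by case: (h2 j jl) => _ h _; exact: contrapT h.
- move=> j jl; case: (h2 j jl) => _ _ h.
  by rewrite ltNge; apply/negP.
Qed.
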